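(* Fix $\gamma\in\mathbb{R}$ and $\alpha\in\mathbb{R}$, and set $\beta=\alpha$. Let $\bm{u}_\gamma=(\sin\gamma,0,\cos\gamma)$ and $\hat{\bm z}=(0,0,1)$. For a unit vector $\bm u$ and angle $\theta$ let $\bm q(\bm u,\theta)=\{\cos(\theta/2),\ \sin(\theta/2)\,\bm u\}$ denote the unit quaternion representing rotation by $\theta$ about $\bm u$, and define the quaternions (Hamilton product) \[ \bm Q^{(1)}=\bm q(\bm u_\gamma,\beta)\,\bm q(\hat{\bm z},\alpha),\qquad \bm Q^{(4)}=\bm q(\bm u_\gamma,\beta+\pi)\,\bm q(\hat{\bm z},\alpha+\pi), \] (representing the rotations $R_1=R^{\bm u_\gamma}_\beta R^z_\alpha$ and $R_4=R^{\bm u_\gamma}_{\beta+\pi}R^z_{\alpha+\pi}$). For an integer $j\ge 1$ let $\bm q^{(j)}=(\bm Q^{(1)})^j\bm Q^{(4)}=\{q^{(j)}_1,q^{(j)}_2,q^{(j)}_3,q^{(j)}_4\}$ and define $\theta_{41^j}(\alpha,\gamma)=2\arccos q^{(j)}_1$. Then for every $j\ge 1$, if \[ \cos\left(\frac{\gamma}{2}\right)\sin\left(\frac{\alpha}{2}\right)=\sin\left(\frac{\pi}{2(2j+1)}\right)=\cos\left(\frac{j\pi}{2j+1}\right), \] then $\theta_{41^j}(\alpha,\gamma)=\dfrac{2j\pi}{2j+1}$.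
   Context: Setting: a piecewise isometry on the lower unit hemispherical shell obtained by rotating by $\alpha$ about the horizontal $z$-axis and then by $\beta$ about a second horizontal axis $\bm u_\gamma$ making angle $\gamma$ with the first, with points crossing the equator rotated by an extra $\pi$. On atom $P_1$ the map acts as the rotation $R_1$ and on atom $P_4$ as $R_4$; the itinerary $41^j$ (one visit to $P_4$ followed by $j$ visits to $P_1$) produces the net rotation $R_1^j R_4$ (rightmost applied first), whose quaternion is $\bm q^{(j)}$, and $\theta_{41^j}$ is the corresponding internal rotation angle of the cell with that itinerary. $R^{\bm a}_\theta$ denotes rotation by $\theta$ about axis $\bm a$. *)

(* Defs.v *)
From Stdlib Require Import Reals.
Open Scope R_scope.

(* Quaternion {w, (x,y,z)} = w + x i + y j + z k. *)
Record quat : Type := Quat { qw : R; qx : R; qy : R; qz : R }.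

Definition qmul (p q : quat) : quat :=
  Quat (qw p * qw q - qx p * qx q - qy p * qy q - qz p * qz q)
       (qw p * qx q + qx p * qw q + qy p * qz q - qz p * qy q)
       (qw p * qy q - qx p * qz q + qy p * qw q + qz p * qx q)
       (qw p * qz q + qx p * qy q - qy p * qx q + qz p * qw q).

Definition qone : quat := Quat 1 0 0 0.

Fixpoint qpow (q : quat) (n : nat) : quat :=
  match n with O => qone | S m => qmul q (qpow q m) end.

Definition qrot (u1 u2 u3 theta : R) : quat :=
  Quat (cos (theta / 2)) (sin (theta / 2) * u1)
       (sin (theta / 2) * u2) (sin (theta / 2) * u3).

Definition q_ugamma (gamma theta : R) : quat := qrot (sin gamma) 0 (cos gamma) theta.
Definition q_z (theta : R) : quat := qrot 0 0 1 theta.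

Definition Q1 (alpha gamma : R) : quat :=
  qmul (q_ugamma gamma alpha) (q_z alpha).
Definition Q4 (alpha gamma : R) : quat :=
  qmul (q_ugamma gamma (alpha + PI)) (q_z (alpha + PI)).

Definition qj (alpha gamma : R) (j : nat) : quat :=
  qmul (qpow (Q1 alpha gamma) j) (Q4 alpha gamma).

Definition theta41j (alpha gamma : R) (j : nat) : R :=
  2 * acos (qw (qj alpha gamma j)).

(* Main.v *)
Require Import Defs.
From Stdlib Require Import Reals Lra Lia Psatz.
Open Scope R_scope.

Lemma alg (C Sn sp c s k h : R): sp<>0 -> s*s+c*c=1 -> k*s = h ->
  Sn*(1-(1-2*h^2)) = C*sp ->
  C*(s^2 - c^2*(2*k^2-1)) - Sn/sp*(-(c^2*s^2*(2*k^2)^2)) = C.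
Proof.
  intros Hsp Hsc Hk E. subst h.
  replace (C*(s^2 - c^2*(2*k^2-1)) - Sn/sp*(-(c^2*s^2*(2*k^2)^2)))
    with ((C*sp)*(s^2 - c^2*(2*k^2-1)) / sp + Sn * (4*c^2*s^2*k^4)/sp) by (field; auto).
  rewrite <- E.
  replace (c^2) with (1 - s^2) by lra.
  field_simplify; auto.
  apply Rmult_eq_reg_r with sp; auto. field_simplify; auto.
  replace (1 - (1 - 2*(k*s)^2)) with (2*(k*s)^2) in E by ring.
  nra.
Qed.

Lemma pow_form (q : quat) (phi : R) :
  qw q = cos phi -> qx q ^ 2 + qy q ^ 2 + qz q ^ 2 = sin phi ^ 2 -> sin phi <> 0 ->
  forall k : nat, qpow q k =
    Quat (cos (INR k * phi)) (sin (INR k * phi) / sin phi * qx q)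
         (sin (INR k * phi) / sin phi * qy q) (sin (INR k * phi) / sin phi * qz q).
Proof.
  intros Hw Hn Hs k; induction k as [|k IH].
  - simpl. unfold qone. rewrite Rmult_0_l, cos_0, sin_0. f_equal; field; auto.
  - simpl qpow. rewrite IH. destruct q as [w x y z]; cbn [qw qx qy qz] in Hw, Hn, IH |- *. subst w.
    unfold qmul; simpl qw; simpl qx; simpl qy; simpl qz. rewrite S_INR.
    replace ((INR k + 1) * phi) with (INR k * phi + phi) by ring.
    rewrite cos_plus, sin_plus. f_equal.
    + replace (cos phi * cos (INR k * phi) - x * (sin (INR k * phi) / sin phi * x) -
        y * (sin (INR k * phi) / sin phi * y) - z * (sin (INR k * phi) / sin phi * z))
      with (cos phi * cos (INR k * phi) - sin (INR k * phi) / sin phi * (x^2+y^2+z^2)) by ring.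
      rewrite Hn. field; auto.
    + field; auto.
    + field; auto.
    + field; auto.
Qed.

Theorem proposition1 (gamma alpha : R) (j : nat) :
  (1 <= j)%nat ->
  cos (gamma / 2) * sin (alpha / 2) = sin (PI / (2 * (2 * INR j + 1))) ->
  theta41j alpha gamma j = 2 * INR j * PI / (2 * INR j + 1).
Proof.
  intros Hj H.
  set (phi := PI / (2 * INR j + 1)).
  assert (HJ : 1 <= INR j) by (apply (le_INR 1); auto).
  assert (Hd : 0 < 2 * INR j + 1) by lra.
  assert (Hphi0 : 0 < phi) by (unfold phi; apply Rdiv_lt_0_compat; [apply PI_RGT_0|lra]).
  assert (HphiPI : phi < PI).
  { unfold phi. apply (Rmult_lt_reg_r (2 * INR j + 1)); auto.
    unfold Rdiv. rewrite Rmult_assoc, Rinv_l by lra. pose proof PI_RGT_0; nra. }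
  assert (Hsphi : sin phi <> 0) by (pose proof (sin_gt_0 phi Hphi0 HphiPI); lra).
  replace (PI / (2 * (2 * INR j + 1))) with (phi / 2) in H by (unfold phi; field; lra).
  assert (Hcphi : cos phi = 1 - 2 * sin (phi/2) ^ 2).
  { replace phi with (2 * (phi/2)) at 1 by field. rewrite cos_2a_sin. ring. }
  set (g := gamma / 2) in *. set (a := alpha / 2) in *.
  set (h := sin (phi / 2)) in *.
  assert (Hg : gamma = 2 * g) by (unfold g; field).
  assert (Ha1 : (alpha + PI) / 2 = a + PI / 2) by (unfold a; field).
  pose proof (sin2_cos2 a) as Hca. pose proof (sin2_cos2 g) as Hcg.
  unfold Rsqr in *.
  set (Q := Q1 alpha gamma).
  assert (HQw : qw Q = cos phi).
  { unfold Q, Q1, q_ugamma, q_z, qrot, qmul; simpl. fold a.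
    rewrite Hg, sin_2a, cos_2a. rewrite Hcphi. rewrite <- H. nra. }
  assert (HQn : qx Q ^ 2 + qy Q ^ 2 + qz Q ^ 2 = sin phi ^ 2).
  { replace (sin phi ^ 2) with (1 - cos phi ^ 2) by (pose proof (sin2_cos2 phi); unfold Rsqr in *; lra).
    rewrite <- HQw.
    unfold Q, Q1, q_ugamma, q_z, qrot, qmul; simpl. fold a.
    rewrite Hg, sin_2a, cos_2a. match goal with |- ?L = 1 - ?W => assert (E : L + W = (cos a*cos a + sin a*sin a*((sin g*sin g+cos g*cos g)^2))*(sin a*sin a+cos a*cos a)) by ring; rewrite Hcg, Hca in E; lra end. }
  pose proof (pow_form Q phi HQw HQn Hsphi j) as HP.
  assert (Hsin : sin (INR j * phi) * (1 - cos phi) = cos (INR j * phi) * sin phi).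
  { assert (E : sin (INR j * phi + phi) = sin (INR j * phi)).
    { replace (INR j * phi + phi) with (PI - INR j * phi) by (unfold phi; field; lra).
      apply sin_PI_x. }
    rewrite sin_plus in E. lra. }
  assert (Hw : qw (qj alpha gamma j) = cos (INR j * phi)).
  { unfold qj. fold Q. rewrite HP.
    unfold Q, Q1, Q4, q_ugamma, q_z, qrot, qmul; simpl.
    rewrite Ha1. fold a.
    rewrite sin_plus, cos_plus, sin_PI2, cos_PI2.
    rewrite Hg, sin_2a, cos_2a.
    replace (sin g * sin g) with (1 - cos g * cos g) by lra.
    rewrite Hcphi in Hsin.
    etransitivity; [| exact (alg (cos (INR j*phi)) (sin (INR j*phi)) (sin phi) (cos a) (sin a) (cos g) h Hsphi Hca H Hsin)].
    field; auto. }
  unfold theta41j. rewrite Hw. rewrite acos_cos.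
  - unfold phi; field; lra.
  - split.
    + apply Rmult_le_pos; lra.
    + unfold phi. apply (Rmult_le_reg_r (2 * INR j + 1)); auto.
      replace (INR j * (PI / (2 * INR j + 1)) * (2 * INR j + 1)) with (INR j * PI) by (field; lra).
      pose proof PI_RGT_0; nra.
Qed.
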